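(* Let $Q$ be a polyhedral partially ordered abelian group and $D\subseteq Q$ a downset. Then $D=\bigcup_{\tau}\Gamma_\tau(D_\tau)$, the union over all faces $\tau$ of the positive cone $Q_+$.
   Context: A partially ordered abelian group is an abelian group $Q$ generated by a submonoid $Q_+$ (positive cone) whose only unit is $0$; $q\preceq q'$ iff $q'-q\in Q_+$. A face is a submonoid $\sigma\subseteq Q_+$ such that $Q_+\setminus\sigma$ is an ideal of the monoid $Q_+$; $Q$ is polyhedral if there are finitely many faces. A downset is a subset $D\subseteq Q$ with $D-Q_+=D$. For a face $\tau$ and downset $D$: the localization of $D$ along $\tau$ is $D_\tau=\{q\in D: q+\tau\subseteq D\}$ (again a downset). An element $q\in D$ is globally supported on $\tau$ (in $D$) if $q\notin D_{\tau'}$ for every face $\tau'\not\subseteq\tau$; $\Gamma_\tau D$ is the set of such elements. Thus $\Gamma_\tau(D_\tau)$ is the set of $q\in D_\tau$ with $q\notin(D_\tau)_{\tau'}$ for every face $\tau'\not\subseteq\tau$ (the local $\tau$-support of $D$). *)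

(* Defs.v *)
From HB Require Import structures.
From mathcomp Require Import all_boot all_order all_algebra.
From mathcomp Require Import boolp classical_sets cardinality.
Set Implicit Arguments. Unset Strict Implicit. Unset Printing Implicit Defensive.
Import GRing.Theory.
Local Open Scope ring_scope.
Local Open Scope classical_set_scope.

Section POGroup.
Variable Q : zmodType.

Definition submonoid (S : set Q) : Prop :=
  S 0 /\ (forall a b, S a -> S b -> S (a + b)).

Definition positive_cone (Qp : set Q) : Prop :=
  [/\ submonoid Qp,
      (forall p, Qp p -> Qp (- p) -> p = 0) &
      (forall q, exists a b, [/\ Qp a, Qp b & q = a - b])].

Definition is_face (Qp sigma : set Q) : Prop :=
  [/\ submonoid sigma, sigma `<=` Qp &
      (forall a b, (Qp `\` sigma) a -> Qp b -> (Qp `\` sigma) (a + b))].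

Definition polyhedral (Qp : set Q) : Prop := finite_set [set s | is_face Qp s].

Definition downset (Qp D : set Q) : Prop :=
  [set d - p | d in D & p in Qp] = D.

Definition localize (D tau : set Q) : set Q :=
  [set q | D q /\ (forall t, tau t -> D (q + t))].

Definition glob_supp (Qp : set Q) (tau D : set Q) : set Q :=
  [set q | D q /\ (forall tau', is_face Qp tau' -> ~ (tau' `<=` tau) ->
                    ~ localize D tau' q)].
End POGroup.

(* Main.v *)
Require Import Defs.
From mathcomp Require Import all_boot all_order all_algebra.
From mathcomp Require Import boolp classical_sets cardinality.
Local Open Scope classical_set_scope.

Lemma max_in_seq (T : eqType) (R : T -> T -> Prop)
  (Rtr : forall x y z, R x y -> R y z -> R x z) (Rirr : forall x, ~ R x x)
  (P : T -> Prop) (s : seq T) (x0 : T) : P x0 ->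
  exists x, [/\ P x, x = x0 \/ R x0 x &
     forall y, y \in s -> P y -> ~ R x y].
Proof.
move=> Px0; elim: s => [|a s [x [Px hx hmax]]].
  by exists x0; split; [done|left|].
have [[Pa Rxa]|nPR] := pselect (P a /\ R x a).
  exists a; split => //.
    by right; case: hx => [<-|Rx0x] //; exact: Rtr Rx0x Rxa.
  move=> y; rewrite inE => /orP[/eqP ->|ys] Py Ray; first exact: Rirr Ray.
  by apply: (hmax y ys Py); exact: Rtr Rxa Ray.
exists x; split => // y; rewrite inE => /orP[/eqP ->|ys] Py Rxy.
  by apply: nPR.
exact: hmax y ys Py Rxy.
Qed.

Import GRing.Theory.
Local Open Scope ring_scope.

Theorem theorem3p10 (Q : zmodType) (Qp : set Q)
  (hQp : positive_cone Qp) (hpoly : polyhedral Qp)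
  (D : set Q) (hD : downset Qp D) :
  D = \bigcup_(tau in [set s | is_face Qp s]) glob_supp Qp tau (localize D tau).
Proof.
case: hQp => [[Qp0 QpD] Qpunit _].
have Ddown : forall d p, D d -> Qp p -> D (d - p).
  by move=> d p Dd Qpp; rewrite -hD; exists d => //; exists p.
apply/seteqP; split; last first.
  by move=> q [tau _ [[Dq _] _]].
move=> q Dq.
have [s hs] := (finite_seqP _).1 hpoly.
pose R (A B : set Q) := A `<=` B /\ ~ (B `<=` A).
have Rtr : forall x y z, R x y -> R y z -> R x z.
  move=> x y z [xy nyx] [yz nzy]; split; first exact: subset_trans xy yz.
  by move=> zx; apply: nyx; exact: subset_trans yz zx.
have Rirr : forall x, ~ R x x by move=> x [_ []].
pose P (tau : set Q) := is_face Qp tau /\ localize D tau q.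
have P0 : P [set 0].
  split.
    split.
    - by split => // a b -> ->; rewrite addr0.
    - by move=> x ->.
    move=> a b [Qpa na0] Qpb; split; first exact: QpD.
    move=> /= ab0; apply: na0 => /=; apply: Qpunit => //.
    by have -> : - a = b by apply/eqP; rewrite eq_sym -addr_eq0 addrC ab0.
  by split => // t ->; rewrite addr0.
have [tau [[ftau ltau] _ hmax]] := @max_in_seq _ R Rtr Rirr P s _ P0.
exists tau => //; split => // tau' ftau' ntt' [ltq ltq'].
case: ftau => [[tau0 tauD] tauQ _]; case: ftau' => [[tau'0 tau'D] tau'Q _].
pose sigma := [set p | Qp p /\ exists t t', [/\ tau t, tau' t' & Qp (t + t' - p)]].
have fsig : is_face Qp sigma.
  split.
  - split.
      by split => //; exists 0, 0; rewrite !addr0 subrr.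
    move=> a b [Qpa [t1 [t1' [h1 h1' q1]]]] [Qpb [t2 [t2' [h2 h2' q2]]]].
    split; first exact: QpD.
    exists (t1 + t2), (t1' + t2'); split; [exact: tauD|exact: tau'D|].
    have -> : t1 + t2 + (t1' + t2') - (a + b) = (t1 + t1' - a) + (t2 + t2' - b).
      by rewrite (addrACA t1 t2 t1' t2') opprD (addrACA (t1 + t1')).
    exact: QpD.
  - by move=> p [].
  move=> a b [Qpa nsa] Qpb; split; first exact: QpD.
  move=> [_ [t [t' [ht ht' hq]]]]; apply: nsa; split => //.
  exists t, t'; split => //.
  have -> : t + t' - a = (t + t' - (a + b)) + b.
    by rewrite opprD addrA addrNK.
  exact: QpD.
have Psig : P sigma.
  split => //; split => // p [Qpp [t [t' [ht ht' hq]]]].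
  have := Ddown _ _ ((ltq' t' ht').2 t ht) hq.
  suff -> : q + t' + t - (t + t' - p) = q + p by [].
  by rewrite [t + t']addrC -[q + t' + t]addrA opprB addrACA subrr addr0.
have sigs : sigma \in s by have : [set` s] sigma by rewrite -hs; exact: fsig.

apply: (hmax sigma sigs Psig); split.
  move=> t ht; split; first exact: tauQ.
  by exists t, 0; split => //; rewrite addr0 subrr.
move=> sigt; apply: ntt' => t' ht'; apply: sigt; split; first exact: tau'Q.
by exists 0, t'; split => //; rewrite add0r subrr.
Qed.
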